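(* Let $X$ be a real vector space, $n\ge 2$, and let $(\cdot,\cdot\mid\cdot,\ldots,\cdot)$ be a weak $n$-inner product on $X$. Fix $x_2,\ldots,x_n\in X$, let $Y=\mathrm{span}\{x_2,\ldots,x_n\}$ and let $X/Y=\{\hat x: x\in X\}$ be the quotient space, where $\hat x=\{u\in X: u-x\in Y\}$. Then the function $\psi:(X/Y)^2\to\mathbb{R}$, $\psi(\hat x,\hat y):=(x,y\mid x_n,\ldots,x_2)$, is well defined and is a semi-inner product on $X/Y$. Moreover, if $x_2,\ldots,x_n$ are linearly independent, then $\psi$ is an inner product on $X/Y$.
   Context: A weak $n$-inner product ($n\ge2$) on a real vector space $X$ is a function $(\cdot,\cdot\mid\cdot,\ldots,\cdot):X^{n+1}\to\mathbb{R}$, written $(x,y\mid x_n,\ldots,x_2)$, such that for all $x,x',y,x_2,\ldots,x_n\in X$ and $\alpha\in\mathbb{R}$: (P1) $(x,x\mid x_n,\ldots,x_2)\ge 0$, with equality if and only if $x,x_2,\ldots,x_n$ are linearly dependent; (P2) $(x,x\mid x_n,\ldots,x_2)=(x_n,x_n\mid x,x_{n-1},\ldots,x_2)$; (P3) $(x,y\mid x_n,\ldots,x_2)=(y,x\mid x_n,\ldots,x_2)$; (P4) $(\alpha x,y\mid x_n,\ldots,x_2)=\alpha(x,y\mid x_n,\ldots,x_2)$; (P5) $(x+x',y\mid x_n,\ldots,x_2)=(x,y\mid x_n,\ldots,x_2)+(x',y\mid x_n,\ldots,x_2)$. A semi-inner product is a symmetric bilinear form $\psi$ with $\psi(v,v)\ge0$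 for all $v$. *)

(* Defs.v *)
From HB Require Import structures.
From mathcomp Require Import all_boot all_order all_algebra.
From mathcomp Require Import classical_sets reals.
Set Implicit Arguments. Unset Strict Implicit. Unset Printing Implicit Defensive.
Import Order.TTheory GRing.Theory Num.Theory.
Local Open Scope ring_scope.
Local Open Scope classical_set_scope.

Section Defs.
Variables (R : realType) (X : lmodType R).

Definition lin_dep (s : seq X) : Prop :=
  exists c : seq R, size c = size s /\ has (fun a => a != 0) c /\
    \sum_(i < size s) c`_i *: s`_i = 0.

Definition lin_span (s : seq X) : set X :=
  [set v | exists c : seq R, size c = size s /\ v = \sum_(i < size s) c`_i *: s`_i].

Definition qclass (Y : set X) (x : X) : set X := [set u | Y (u - x)].

(* A weak n-inner product.  The conditioning list s = [:: x_n; ...; x_2]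
   (of size n-1) encodes (x, y | x_n, ..., x_2) as  ip x y s. *)
Definition weak_n_inner_product (n : nat) (ip : X -> X -> seq X -> R) : Prop :=
  [/\ forall x s, size s = n.-1 ->
         0 <= ip x x s /\ (ip x x s = 0 <-> lin_dep (x :: s)),
      forall x z t, size t = n.-2 -> ip x x (z :: t) = ip z z (x :: t),
      forall x y s, size s = n.-1 -> ip x y s = ip y x s,
      forall a x y s, size s = n.-1 -> ip (a *: x) y s = a * ip x y s
    & forall x x' y s, size s = n.-1 -> ip (x + x') y s = ip x y s + ip x' y s].

(* psi, defined on the classes of X/Y (the quotient operations being
   qclass Y x + qclass Y y = qclass Y (x + y), a *: qclass Y x = qclass Y (a *: x)),
   is a semi-inner product: symmetric bilinear and nonnegative. *)
Definition quot_semi_inner_product (Y : set X) (psi : set X -> set X -> R) : Prop :=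
  [/\
      forall x y, psi (qclass Y x) (qclass Y y) = psi (qclass Y y) (qclass Y x),
      forall x, 0 <= psi (qclass Y x) (qclass Y x)
    &
      [/\ forall a x y, psi (qclass Y (a *: x)) (qclass Y y) = a * psi (qclass Y x) (qclass Y y),
          forall x x' y, psi (qclass Y (x + x')) (qclass Y y)
                     = psi (qclass Y x) (qclass Y y) + psi (qclass Y x') (qclass Y y),
          forall a x y, psi (qclass Y x) (qclass Y (a *: y)) = a * psi (qclass Y x) (qclass Y y)
        & forall x y y', psi (qclass Y x) (qclass Y (y + y'))
                     = psi (qclass Y x) (qclass Y y) + psi (qclass Y x) (qclass Y y')]].

Definition quot_inner_product (Y : set X) (psi : set X -> set X -> R) : Prop :=
  quot_semi_inner_product Y psi /\
  forall x, psi (qclass Y x) (qclass Y x) = 0 -> qclass Y x = qclass Y 0.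

End Defs.

(* Main.v *)
Require Import Defs.
From HB Require Import structures.
From mathcomp Require Import all_boot all_order all_algebra.
From mathcomp Require Import classical_sets reals.
From mathcomp Require Import boolp.
From mathcomp Require Import ring lra.
Import Order.TTheory GRing.Theory Num.Theory.
Local Open Scope ring_scope.
Local Open Scope classical_set_scope.

Set Implicit Arguments.
Section Aux.
Variables (R : realType) (X : lmodType R).
Implicit Types (s : seq X).

Lemma span_add s a b : lin_span s a -> lin_span s b -> lin_span s (a + b).
Proof.
move=> [c [Hc ->]] [d [Hd ->]].
exists (mkseq (fun i => c`_i + d`_i) (size s)); split; first by rewrite size_mkseq.
rewrite -big_split /=; apply: eq_bigr => i _.
by rewrite nth_mkseq // scalerDl.
Qed.

Lemma span_scale s k a : lin_span s a -> lin_span s (k *: a).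
Proof.
move=> [c [Hc ->]].
exists (mkseq (fun i => k * c`_i) (size s)); split; first by rewrite size_mkseq.
rewrite scaler_sumr; apply: eq_bigr => i _.
by rewrite nth_mkseq // scalerA.
Qed.

Lemma span_opp s a : lin_span s a -> lin_span s (- a).
Proof. by move=> h; rewrite -scaleN1r; apply: span_scale. Qed.

Lemma span_dep s y : lin_span s y -> lin_dep (y :: s).
Proof.
move=> [c [Hc Hy]].
exists ((-1) :: c); split; first by rewrite /= Hc.
split; first by rewrite /= oppr_eq0 oner_eq0.
rewrite big_ord_recl /=.
rewrite scaleN1r -Hy.
by rewrite addNr.
Qed.

Lemma dep_span s x : lin_dep (x :: s) -> ~ lin_dep s -> lin_span s x.
Proof.
move=> [c [Hc [Hnz Hsum]]] Hind.
case: c Hc Hnz Hsum => [//|c0 c] /= [Hc] Hnz.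
rewrite big_ord_recl /=.
move=> Hsum.
have Hc0 : c0 != 0.
  apply/negP => /eqP E; apply: Hind; exists c; split => //; split.
    by move: Hnz; rewrite E eqxx.
  by move: Hsum; rewrite E scale0r add0r.
exists (mkseq (fun i => - c`_i / c0) (size s)); split; first by rewrite size_mkseq.
have -> : x = c0^-1 *: (c0 *: x) by rewrite scalerA mulVf // scale1r.
have -> : c0 *: x = - \sum_(i < size s) c`_i *: s`_i.
  by apply/eqP; rewrite -addr_eq0 Hsum.
rewrite scalerN scaler_sumr -sumrN; apply: eq_bigr => i _.
by rewrite nth_mkseq // scalerA -scaleNr mulNr mulrC.
Qed.

Lemma span_qclass s x : lin_span s x -> qclass (lin_span s) x = qclass (lin_span s) 0.
Proof.
move=> hx; rewrite /qclass; apply/seteqP; split => u /=.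
  by move=> h; rewrite subr0 -(subrK x u); apply: span_add.
by rewrite subr0 => h; apply: span_add => //; apply: span_opp.
Qed.

Definition rep (A : set X) : X :=
  match pselect (exists x, A x) with
  | left h => projT1 (cid h)
  | right _ => 0
  end.

Lemma repP (Y : set X) x : Y 0 -> Y (rep (qclass Y x) - x).
Proof.
move=> Y0; rewrite /rep; case: pselect => [h|[]]; last by exists x; rewrite /qclass /= subrr.
by case: (cid h).
Qed.

Variables (n : nat) (ip : X -> X -> seq X -> R).
Hypothesis Hw : weak_n_inner_product n ip.
Variable s : seq X.
Hypothesis Hs : size s = n.-1.

Local Notation B x y := (ip x y s).

Lemma BD1 x x' y : B (x + x') y = B x y + B x' y.
Proof. by case: Hw => _ _ _ _ P5; apply: P5. Qed.
Lemma BZ1 a x y : B (a *: x) y = a * B x y.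
Proof. by case: Hw => _ _ _ P4 _; apply: P4. Qed.
Lemma BC x y : B x y = B y x.
Proof. by case: Hw => _ _ P3 _ _; apply: P3. Qed.
Lemma BD2 x y y' : B x (y + y') = B x y + B x y'.
Proof. by rewrite BC BD1 BC [B y' x]BC. Qed.
Lemma BZ2 a x y : B x (a *: y) = a * B x y.
Proof. by rewrite BC BZ1 BC. Qed.
Lemma Bpos x : 0 <= B x x.
Proof. by case: Hw => P1 _ _ _ _; case: (P1 x s Hs). Qed.

Lemma B0 y z : B y y = 0 -> B y z = 0.
Proof.
move=> Hy; apply/eqP/negPn/negP => hb.
set b := B y z.
have := Bpos ((- (B z z + 1) / (2 * b)) *: y + z).
rewrite BD1 !BD2 !BZ1 !BZ2 Hy (BC z y) .
set t := - (B z z + 1) / (2 * b).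
have -> : t * (t * 0) + t * b + (t * b + B z z) = 2 * (t * b) + B z z by ring.
have -> : 2 * (t * b) = - (B z z + 1).
  rewrite /t; field; by rewrite ?hb ?pnatr_eq0.
lra.
Qed.

Lemma Bspan d z : lin_span s d -> B d z = 0.
Proof.
move=> hd; apply: B0.
case: Hw => P1 _ _ _ _; have [_ h] := P1 d s Hs.
by apply/h; apply: span_dep.
Qed.

Lemma Bwd u v x y : lin_span s (u - x) -> lin_span s (v - y) -> B u v = B x y.
Proof.
move=> hu hv.
rewrite -(subrK x u) BD1 Bspan // add0r.
by rewrite -(subrK y v) BD2 [B x (v - y)]BC Bspan // add0r.
Qed.

End Aux.
Arguments rep {R X}.
Unset Implicit Arguments.

(* s = [:: x_n; ...; x_2], Y = lin_span s. *)
Theorem theorem2p1 (R : realType) (X : lmodType R) (n : nat)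
    (ip : X -> X -> seq X -> R) (s : seq X) :
  (2 <= n)%N -> weak_n_inner_product n ip -> size s = n.-1 ->
  exists psi : set X -> set X -> R,
    (forall x y, psi (qclass (lin_span s) x) (qclass (lin_span s) y) = ip x y s) /\
    quot_semi_inner_product (lin_span s) psi /\
    (~ lin_dep s -> quot_inner_product (lin_span s) psi).
Proof.
move=> _ Hw Hs.
have Y0 : lin_span s 0 by rewrite -(scale0r 0); apply: span_scale; exists (nseq (size s) 0);
  rewrite size_nseq; split => //; rewrite big1 // => i _; rewrite nth_nseq ltn_ord scale0r.
have E : forall x y, ip (rep (qclass (lin_span s) x)) (rep (qclass (lin_span s) y)) s = ip x y s.
  by move=> x y; apply: (Bwd Hw Hs); apply: repP Y0.
exists (fun A B => ip (rep A) (rep B) s).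
split; first exact: E.
have Hsemi : quot_semi_inner_product (lin_span s) (fun A B => ip (rep A) (rep B) s).
  split=> [x y|x|]; rewrite ?E.
  - exact: (BC Hw).
  - exact: (Bpos Hw s Hs x).
  split=> *; rewrite !E.
  - exact: (BZ1 Hw).
  - exact: (BD1 Hw).
  - exact: (BZ2 Hw).
  - exact: (BD2 Hw).
split => // Hind; split => // x; rewrite E => h0.
apply: span_qclass; apply: dep_span Hind.
by case: Hw => P1 _ _ _ _; have [_ h] := P1 x s Hs; apply/h.
Qed.
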